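(* Let $n\ge2$, let $P$ be a partial $n$-Metric on a set $X$, let $x_o,y_o\in X$ and let $f,g:X\to X$. Suppose there are real numbers $r$ and $0<c<1$ such that, with $M=\max\{|P(\langle f(x_o)\rangle^{n-1},y_o)|,|P(\langle x_o\rangle^{n-1},y_o)|\}$, for every natural number $i$: $$r\le\min\{P(\langle f^i(x_o)\rangle^n),P(\langle g^i(y_o)\rangle^n)\},\quad P(\langle f^{i+1}(x_o)\rangle^{n-1},g^i(y_o))\le r+c^iM,\quad P(\langle f^{i}(x_o)\rangle^{n-1},g^i(y_o))\le r+c^iM$$ (i.e. $f$ and $g$ are $f$-pairwise $c_r$-contractive over $(x_o,y_o)$). Then $\{f^i(x_o)\}_{i\in\mathbb{N}}$ and $\{g^i(y_o)\}_{i\in\mathbb{N}}$ form a Cauchy pair.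
   Context: Notation: $\langle a\rangle^k$ denotes the $k$-tuple $(a,\dots,a)$ inserted into an argument list; $f^0(x)=x$, $f^{i+1}(x)=f(f^i(x))$. A partial $n$-Metric on $X$ is a function $P:X^n\to\mathbb{R}$ such that for all $x_1,\dots,x_n,a\in X$: (1) $P(\langle x_1\rangle^n)\le P(\langle x_1\rangle^{n-1},x_2)$; (2) $P$ is invariant under permutations of its arguments; (3) $P(\langle x_1\rangle^{n-1},x_2)=P(\langle x_1\rangle^n)$ and $P(\langle x_2\rangle^{n-1},x_1)=P(\langle x_2\rangle^n)$ iff $x_1=x_2$; (4) $P(x_1,\dots,x_n)\le P(x_1,\dots,x_{n-1},a)+P(\langle a\rangle^{n-1},x_n)-P(\langle a\rangle^n)$. Two sequences $\{x_i\},\{y_i\}$ form a Cauchy pair if there is $r'\in\mathbb{R}$ such that for every $\epsilon>0$ there is $N$ with $r'-\epsilon<\min\{P(\langle x_i\rangle^n),P(\langle y_i\rangle^n)\}\le P(\langle x_i\rangle^{n-1},y_j)<r'+\epsilon$ for all $i,j>N$. *)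

(* Defs.v *)
(* An n-ary function P : X^n -> R is represented as
   P : list X -> R, of which only the values on lists of length n matter. *)
From Stdlib Require Export Reals List Permutation.
Open Scope R_scope.

Definition rep {X : Type} (a : X) (k : nat) : list X := repeat a k.

Definition partial_nMetric {X : Type} (n : nat) (P : list X -> R) : Prop :=
  (forall x1 x2 : X, P (rep x1 n) <= P (rep x1 (n - 1) ++ x2 :: nil)) /\
  (forall l l' : list X, length l = n -> Permutation l l' -> P l = P l') /\
  (forall x1 x2 : X,
      (P (rep x1 (n - 1) ++ x2 :: nil) = P (rep x1 n) /\
       P (rep x2 (n - 1) ++ x1 :: nil) = P (rep x2 n)) <-> x1 = x2) /\
  (* (4) triangle-type inequality; l = (x1,...,x_{n-1}) *)
  (forall (l : list X) (xn a : X), length l = (n - 1)%nat ->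
      P (l ++ xn :: nil) <=
      P (l ++ a :: nil) + P (rep a (n - 1) ++ xn :: nil) - P (rep a n)).

Definition cauchy_pair {X : Type} (n : nat) (P : list X -> R)
    (x y : nat -> X) : Prop :=
  exists r' : R, forall eps : R, eps > 0 -> exists N : nat,
    forall i j : nat, (i > N)%nat -> (j > N)%nat ->
      r' - eps < Rmin (P (rep (x i) n)) (P (rep (y i) n)) /\
      Rmin (P (rep (x i) n)) (P (rep (y i) n)) <= P (rep (x i) (n - 1) ++ y j :: nil) /\
      P (rep (x i) (n - 1) ++ y j :: nil) < r' + eps.

(* Main.v *)
Require Import Defs.
From Stdlib Require Import Reals List Permutation Lra Lia.
Open Scope R_scope.

Lemma tri_l {X : Type} (n : nat) (P : list X -> R) :
  partial_nMetric n P -> forall u v w : X,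
  P (rep u (n-1) ++ w :: nil) <=
  P (rep u (n-1) ++ v :: nil) + P (rep v (n-1) ++ w :: nil) - P (rep v n).
Proof.
  intros [_ [_ [_ H4]]] u v w. apply H4. unfold rep. apply repeat_length.
Qed.

Lemma rev_aux {X : Type} (n : nat) (P : list X -> R) :
  partial_nMetric n P -> forall x y : X, forall m k : nat, (k + m = n)%nat ->
  P (rep x k ++ rep y m) <= P (rep x n) +
     INR m * (P (rep x (n-1) ++ y :: nil) - P (rep x n)).
Proof.
  intros HP x y m. destruct HP as [_ [H2 [_ H4]]].
  induction m as [|m IH]; intros k Hk.
  - simpl. rewrite app_nil_r. replace k with n by lia. lra.
  - unfold rep at 2. simpl repeat. rewrite repeat_cons. rewrite app_assoc.
    assert (Hl : length (rep x k ++ repeat y m) = (n-1)%nat).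
    { rewrite length_app. unfold rep. rewrite !repeat_length. lia. }
    pose proof (H4 _ y x Hl) as T.
    assert (E : P ((rep x k ++ repeat y m) ++ x :: nil) = P (rep x (S k) ++ rep y m)).
    { symmetry. apply H2.
      - rewrite length_app. unfold rep. rewrite !repeat_length. lia.
      - unfold rep. simpl. apply Permutation_cons_append. }
    pose proof (IH (S k) ltac:(lia)) as IH'.
    rewrite S_INR. lra.
Qed.

Lemma rev_l {X : Type} (n : nat) (P : list X -> R) :
  (1 <= n)%nat -> partial_nMetric n P -> forall x y : X,
  P (rep y (n-1) ++ x :: nil) <= P (rep x n) +
     INR (n-1) * (P (rep x (n-1) ++ y :: nil) - P (rep x n)).
Proof.
  intros Hn HP x y. pose proof (rev_aux n P HP x y (n-1) 1 ltac:(lia)) as T.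
  destruct HP as [_ [H2 _]].
  assert (E : P (rep y (n-1) ++ x :: nil) = P (rep x 1 ++ rep y (n-1))).
  { apply H2. rewrite length_app. unfold rep. rewrite repeat_length. simpl. lia.
    unfold rep. simpl. apply Permutation_sym, Permutation_cons_append. }
  lra.
Qed.

Lemma diag_l {X : Type} (n : nat) (P : list X -> R) :
  (1 <= n)%nat -> forall x : X, P (rep x (n-1) ++ x :: nil) = P (rep x n).
Proof.
  intros Hn x. unfold rep. rewrite <- repeat_cons.
  replace n with (S (n-1)) at 2 by lia. reflexivity.
Qed.

Lemma pow_le_N (c : R) : 0 <= c <= 1 -> forall N i, (N <= i)%nat -> c ^ i <= c ^ N.
Proof.
  intros Hc N i Hi. induction Hi. lra.
  simpl. apply Rle_trans with (c ^ m); auto.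
  pose proof (pow_le c m ltac:(lra)). nra.
Qed.

Theorem theorem5p13 (X : Type) (n : nat) (P : list X -> R)
  (xo yo : X) (f g : X -> X) (r c : R) :
  (2 <= n)%nat ->
  partial_nMetric n P ->
  0 < c -> c < 1 ->
  (forall i : nat,
     r <= Rmin (P (rep (Nat.iter i f xo) n)) (P (rep (Nat.iter i g yo) n)) /\
     P (rep (Nat.iter (S i) f xo) (n - 1) ++ Nat.iter i g yo :: nil)
       <= r + c ^ i * Rmax (Rabs (P (rep (f xo) (n - 1) ++ yo :: nil)))
                           (Rabs (P (rep xo (n - 1) ++ yo :: nil))) /\
     P (rep (Nat.iter i f xo) (n - 1) ++ Nat.iter i g yo :: nil)
       <= r + c ^ i * Rmax (Rabs (P (rep (f xo) (n - 1) ++ yo :: nil)))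
                           (Rabs (P (rep xo (n - 1) ++ yo :: nil)))) ->
  cauchy_pair n P (fun i => Nat.iter i f xo) (fun i => Nat.iter i g yo).
Proof.
  intros Hn HP Hc0 Hc1 H.
  set (M := Rmax (Rabs (P (rep (f xo) (n - 1) ++ yo :: nil)))
                 (Rabs (P (rep xo (n - 1) ++ yo :: nil)))) in H.
  assert (HM : 0 <= M).
  { unfold M. apply Rle_trans with (Rabs (P (rep xo (n - 1) ++ yo :: nil))).
    apply Rabs_pos. apply Rmax_r. }
  set (xs := fun k => Nat.iter k f xo). set (ys := fun k => Nat.iter k g yo).
  set (D := fun u v => P (rep u (n-1) ++ v :: nil)).
  set (L := INR (n-1)).
  assert (HL : 1 <= L). { unfold L. replace 1 with (INR 1) by reflexivity. apply le_INR. lia. }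
  assert (Ax1 : forall u v, P (rep u n) <= D u v).
  { intros u v. destruct HP as [H1 _]. apply H1. }
  assert (lowx : forall k, r <= P (rep (xs k) n)).
  { intros k. destruct (H k) as [A _]. eapply Rle_trans; [exact A| apply Rmin_l]. }
  assert (lowy : forall k, r <= P (rep (ys k) n)).
  { intros k. destruct (H k) as [A _]. eapply Rle_trans; [exact A| apply Rmin_r]. }
  assert (tri : forall u v w, r <= P (rep v n) -> D u w - r <= (D u v - r) + (D v w - r)).
  { intros u v w Hv. pose proof (tri_l n P HP u v w). unfold D. lra. }
  assert (F1 : forall k, D (xs k) (ys k) - r <= c ^ k * M).
  { intros k. destruct (H k) as [_ [_ A]]. unfold D, xs, ys. lra. }
  assert (F2 : forall k, D (xs (S k)) (ys k) - r <= c ^ k * M).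
  { intros k. destruct (H k) as [_ [A _]]. unfold D, xs, ys. lra. }
  assert (Rev : forall x y d, r <= P (rep x n) -> D x y - r <= d -> D y x - r <= L * d).
  { intros x y d Hx Hxy. pose proof (rev_l n P ltac:(lia) HP x y) as T.
    pose proof (Ax1 x y). fold D L in T.
    assert (L * (D x y - P (rep x n)) <= L * (d - (P (rep x n) - r))).
    { apply Rmult_le_compat_l; lra. }
    assert (0 <= (L - 1) * (P (rep x n) - r)) by (apply Rmult_le_pos; lra). unfold D, L in *. lra. }
  assert (S1 : forall k, D (xs k) (xs (S k)) - r <= (1 + L) * (c ^ k * M)).
  { intros k. pose proof (tri (xs k) (ys k) (xs (S k)) (lowy k)).
    pose proof (Rev _ _ _ (lowx (S k)) (F2 k)). pose proof (F1 k). lra. }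
  assert (S2 : forall k, D (xs (S k)) (xs k) - r <= (1 + L) * (c ^ k * M)).
  { intros k. pose proof (tri (xs (S k)) (ys k) (xs k) (lowy k)).
    pose proof (Rev _ _ _ (lowx k) (F1 k)). pose proof (F2 k). lra. }
  assert (Dg : forall k, D (xs k) (xs k) - r <= c ^ k * M).
  { intros k. unfold D at 1. rewrite diag_l by lia. pose proof (Ax1 (xs k) (ys k)).
    pose proof (F1 k). lra. }
  assert (alg : forall i m, (1 + L) * M * (c ^ i - c ^ (i + m)%nat) / (1 - c)
     + (1 + L) * (c ^ (i + m)%nat * M) = (1 + L) * M * (c ^ i - c ^ (i + S m)%nat) / (1 - c)).
  { intros i m. rewrite Nat.add_succ_r. simpl. field. lra. }
  assert (G : forall i m : nat, D (xs i) (xs (i + m)%nat) - r <= c ^ i * M + (1 + L) * M * (c ^ i - c ^ (i + m)%nat) / (1 - c)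
           /\ D (xs (i + m)%nat) (xs i) - r <= c ^ i * M + (1 + L) * M * (c ^ i - c ^ (i + m)%nat) / (1 - c)).
  { intros i m. induction m as [|m [IH1 IH2]].
    - rewrite Nat.add_0_r. replace (c ^ i - c ^ i) with 0 by ring.
      unfold Rdiv. rewrite Rmult_0_r, Rmult_0_l, Rplus_0_r. split; apply Dg.
    - rewrite <- alg. split.
      + pose proof (tri (xs i) (xs (i + m)%nat) (xs (i + S m)%nat) (lowx _)).
        rewrite Nat.add_succ_r in *. pose proof (S1 (i + m)%nat). lra.
      + pose proof (tri (xs (i + S m)%nat) (xs (i + m)%nat) (xs i) (lowx _)).
        rewrite Nat.add_succ_r in *. pose proof (S2 (i + m)%nat). lra. }
  set (K := 2 * M + (1 + L) * M / (1 - c)).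
  assert (HK : 0 <= K).
  { unfold K. assert (0 <= (1 + L) * M / (1 - c)).
    { unfold Rdiv. apply Rmult_le_pos. nra. left. apply Rinv_0_lt_compat. lra. } lra. }
  assert (Bnd : forall N i j, (N <= i)%nat -> (N <= j)%nat -> D (xs i) (ys j) - r <= c ^ N * K).
  { intros N i j Hi Hj.
    assert (Hd : forall k, 0 <= (1 + L) * M * c ^ k / (1 - c)).
    { intros k. unfold Rdiv. apply Rmult_le_pos. apply Rmult_le_pos. apply Rmult_le_pos; lra. apply pow_le; lra.
      left. apply Rinv_0_lt_compat. lra. }
    pose proof (tri (xs i) (xs j) (ys j) (lowx j)).
    pose proof (F1 j).
    pose proof (pow_le_N c ltac:(lra) N i Hi). pose proof (pow_le_N c ltac:(lra) N j Hj).
    assert (HX : D (xs i) (xs j) - r <= c ^ N * M + (1 + L) * M * c ^ N / (1 - c)).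
    { assert (Hmono : forall k, (N <= k)%nat -> (1 + L) * M * c ^ k / (1 - c) <= (1 + L) * M * c ^ N / (1 - c)).
      { intros k Hk. unfold Rdiv. apply Rmult_le_compat_r. left. apply Rinv_0_lt_compat. lra.
        apply Rmult_le_compat_l. nra. apply pow_le_N; auto; lra. }
      destruct (Nat.le_ge_cases i j) as [Hij|Hij].
      - destruct (G i (j - i)%nat) as [G1 _]. replace (i + (j - i))%nat with j in G1 by lia.
        pose proof (pow_le c j ltac:(lra)). pose proof (Hmono i Hi).
        assert ((1 + L) * M * (c ^ i - c ^ j) / (1 - c) <= (1 + L) * M * c ^ i / (1 - c)).
        { unfold Rdiv. apply Rmult_le_compat_r. left. apply Rinv_0_lt_compat. lra.
          apply Rmult_le_compat_l; nra. }
        nra.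
      - destruct (G j (i - j)%nat) as [_ G2]. replace (j + (i - j))%nat with i in G2 by lia.
        pose proof (pow_le c i ltac:(lra)). pose proof (Hmono j Hj).
        assert ((1 + L) * M * (c ^ j - c ^ i) / (1 - c) <= (1 + L) * M * c ^ j / (1 - c)).
        { unfold Rdiv. apply Rmult_le_compat_r. left. apply Rinv_0_lt_compat. lra.
          apply Rmult_le_compat_l; nra. }
        nra. }
    unfold K. replace (c ^ N * (2 * M + (1 + L) * M / (1 - c)))
      with (2 * (c ^ N * M) + (1 + L) * M * c ^ N / (1 - c)) by (field; lra).
    nra. }
  exists r. intros eps Heps.
  destruct (pow_lt_1_zero c ltac:(rewrite Rabs_right; lra) (eps / (K + 1))) as [N HN].
  { apply Rdiv_lt_0_compat; lra. }
  exists N. intros i j Hi Hj.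
  pose proof (HN N (le_n N)) as HcN. rewrite Rabs_right in HcN by (apply Rle_ge, pow_le; lra).
  assert (HcK : c ^ N * K < eps).
  { apply Rle_lt_trans with (c ^ N * (K + 1)).
    pose proof (pow_le c N ltac:(lra)). nra.
    apply Rlt_le_trans with (eps / (K + 1) * (K + 1)).
    apply Rmult_lt_compat_r; lra. right. field. lra. }
  pose proof (Bnd N i j ltac:(lia) ltac:(lia)).
  destruct (H i) as [Hmin _].
  pose proof (Ax1 (xs i) (ys j)).
  pose proof (Rmin_l (P (rep (xs i) n)) (P (rep (ys i) n))).
  unfold D, xs, ys in *. split; [lra | split; lra].
Qed.
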